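(* For a ring $R$, the following are equivalent: (1) $R$ is uniquely clean; (2) $R$ is a DI ring in which every idempotent is central.
   Context: All rings are associative with identity; $U(R)$ is the group of units. $\Delta(R)=\{x\in R: x+u\in U(R)\text{ for all }u\in U(R)\}$. A ring $R$ is a DI ring if every $r\in R$ can be written $r=e+b$ with $e^2=e\in R$ and $b\in\Delta(R)$. A ring $R$ is uniquely clean if every element of $R$ can be written in exactly one way as $e+u$ with $e^2=e$ and $u\in U(R)$. *)

(* Defs.v *)
From HB Require Import structures.
From mathcomp Require Import all_boot all_algebra.
Set Implicit Arguments. Unset Strict Implicit. Unset Printing Implicit Defensive.
Import GRing.Theory.
Local Open Scope ring_scope.

Definition in_Delta (R : unitRingType) (x : R) : Prop :=
  forall u : R, u \is a GRing.unit -> x + u \is a GRing.unit.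

Definition idem (R : unitRingType) (e : R) : Prop := e * e = e.

Definition DI_ring (R : unitRingType) : Prop :=
  forall r : R, exists e b : R, idem e /\ in_Delta b /\ r = e + b.

Definition uniquely_clean (R : unitRingType) : Prop :=
  forall r : R,
    (exists e u : R, idem e /\ u \is a GRing.unit /\ r = e + u) /\
    (forall e1 u1 e2 u2 : R,
        idem e1 -> u1 \is a GRing.unit -> r = e1 + u1 ->
        idem e2 -> u2 \is a GRing.unit -> r = e2 + u2 ->
        e1 = e2 /\ u1 = u2).

Definition idempotents_central (R : unitRingType) : Prop :=
  forall e : R, idem e -> forall x : R, e * x = x * e.

(* Main.v *)
Require Import Defs.
From mathcomp Require Import all_boot all_algebra.
Set Implicit Arguments. Unset Strict Implicit. Unset Printing Implicit Defensive.
Import GRing.Theory.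
Local Open Scope ring_scope.

Section Aux.
Variable R : unitRingType.
Implicit Types e f g u v w x a b d : R.

Lemma unit_of a b : b * a = 1 -> a * b = 1 -> a \is a GRing.unit.
Proof. by move=> h1 h2; apply/unitrP; exists b. Qed.

Lemma idem_unit f : idem f -> f \is a GRing.unit -> f = 1.
Proof. by move=> hf hu; apply: (mulrI hu); rewrite mulr1 hf. Qed.

Lemma idemC e : idem e -> idem (1 - e).
Proof. by rewrite /idem => he; rewrite mulrBl mul1r mulrBr mulr1 he subrr subr0. Qed.

Lemma unitN1 : (-1 : R) \is a GRing.unit.
Proof. by rewrite unitrN unitr1. Qed.

Lemma nil_corner e a : idem e -> e * a + a * e = a -> a * a = 0 ->
  uniquely_clean R -> a = 0.
Proof.
move=> he hea haa uc.
have hf : idem (e + a).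
  by rewrite /idem mulrDl !mulrDr he haa addr0 -addrA hea.
have hu : a - 1 \is a GRing.unit.
  apply: (@unit_of _ (- (1 + a))).
    rewrite mulNr mulrDl mul1r mulrBr mulr1 haa sub0r.
    by rewrite addrAC subrr sub0r opprK.
  rewrite mulrN mulrBl mul1r mulrDr mulr1 haa addr0. by rewrite opprB addrK.
have [_ /(_ e (a - 1) (e + a) (-1) he hu erefl hf unitN1)] := uc (e + (a - 1)).
case; first by rewrite addrA.
by move=> /eqP; rewrite -subr_eq0 opprD addrA subrr sub0r oppr_eq0 => /eqP.
Qed.


Lemma uc_central : uniquely_clean R -> idempotents_central R.
Proof.
move=> uc e he x.
have ec : e * (1 - e) = 0 by rewrite mulrBr mulr1 he subrr.
have ce : (1 - e) * e = 0 by rewrite mulrBl mul1r he subrr.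
have h1 : e * x * (1 - e) = 0.
  apply: (nil_corner he) => //.
  - rewrite !mulrA he -(mulrA (e * x)) ce mulr0 addr0 //.
  - by rewrite !mulrA -(mulrA (e * x * (1 - e) * e)) -(mulrA (e * x)) ce !(mulr0, mul0r).
have h2 : (1 - e) * x * e = 0.
  apply: (nil_corner he) => //.
  - by rewrite !mulrA ec !mul0r add0r -(mulrA _ e e) he.
  - by rewrite !mulrA -(mulrA ((1 - e) * x * e * (1 - e))) -(mulrA ((1 - e) * x)) ec !(mulr0, mul0r).
move: h1 h2; rewrite mulrBr mulr1 !mulrBl !mul1r => /eqP h1 /eqP h2.
move: h1 h2; rewrite !subr_eq0 => /eqP h1 /eqP h2. by rewrite h1 h2.
Qed.


Lemma cmul (c1 c2 X Y : R) : (forall z, c2 * z = z * c2) ->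
  (c1 * X) * (c2 * Y) = (c1 * c2) * (X * Y).
Proof. by move=> hc; rewrite -!mulrA (mulrA X) -hc !mulrA. Qed.

Lemma corner_unit (g A B : R) : idem g -> (forall z, g * z = z * g) ->
  A \is a GRing.unit -> B \is a GRing.unit ->
  (1 - g) * A + g * B \is a GRing.unit.
Proof.
move=> hg hc hA hB.
have hp : forall z, (1 - g) * z = z * (1 - g).
  by move=> z; rewrite mulrBl mulrBr mul1r mulr1 hc.
have pp : (1 - g) * (1 - g) = 1 - g by apply: idemC.
have pg : (1 - g) * g = 0 by rewrite mulrBl mul1r hg subrr.
have gp : g * (1 - g) = 0 by rewrite mulrBr mulr1 hg subrr.
apply: (@unit_of _ ((1 - g) * A^-1 + g * B^-1)).
  rewrite mulrDl !mulrDr (@cmul _ _ _ _ hp) (@cmul _ _ _ _ hc) (@cmul _ _ _ _ hp) (@cmul _ _ _ _ hc).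
  by rewrite pp pg gp hg !mul0r addr0 add0r !mulVr // !mulr1 subrK.
rewrite mulrDl !mulrDr (@cmul _ _ _ _ hp) (@cmul _ _ _ _ hc) (@cmul _ _ _ _ hp) (@cmul _ _ _ _ hc).
by rewrite pp pg gp hg !mul0r addr0 add0r !mulrV // !mulr1 subrK.
Qed.


Lemma uc_delta u : uniquely_clean R -> u \is a GRing.unit -> in_Delta (u - 1).
Proof.
move=> uc hu v hv.
have cen := uc_central uc.
set s := 1 + v^-1 * (u - 1).
have [[g [w [hg [hw hs]]]] _] := uc s.
have h1 : g * (v^-1 * (u - 1)) = g * w.
  have := congr1 (fun z => g * z) hs.
  by rewrite /s /= (mulrDr g 1) mulr1 (mulrDr g g w) hg => /addrI.
have h2 : g * (u - 1) = g * (v * w).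
  have := congr1 (fun z => v * z) h1.
  rewrite !mulrA -(cen g hg v) -(mulrA g v v^-1) mulrV // mulr1 => ->.
  by [].

have hug : u - g = (1 - g) * u + g * (v * w).
  by rewrite -h2 mulrBl mul1r mulrBr mulr1 addrA subrK.
have hu' : u - g \is a GRing.unit.
  by rewrite hug; apply: corner_unit => //; [exact: cen | rewrite unitrMr].
have [_ /(_ 0 u g (u - g))] := uc u.
case => //.
- by rewrite /idem mulr0.
- by rewrite add0r.
- by rewrite addrC subrK.
move=> g0 _.
have -> : u - 1 + v = v * s by rewrite /s mulrDr mulr1 mulrA mulrV // mul1r addrC.
by rewrite unitrMr // hs -g0 add0r.
Qed.


Lemma DeltaN b : in_Delta b -> in_Delta (- b).
Proof.
by move=> hb v hv; rewrite -(opprK v) -opprD unitrN; apply: hb; rewrite unitrN.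
Qed.

Lemma DeltaD a b : in_Delta a -> in_Delta b -> in_Delta (a + b).
Proof. by move=> ha hb v hv; rewrite -addrA; apply: ha; apply: hb. Qed.

Lemma DI_unit u : DI_ring R -> u \is a GRing.unit ->
  exists b, in_Delta b /\ u = 1 + b.
Proof.
move=> di hu; have [f [b [hf [hb hfb]]]] := di u.
exists b; split => //; rewrite hfb; congr (_ + _); apply: idem_unit => //.
have := DeltaN hb hu; by rewrite hfb addrCA addNr addr0.
Qed.

Lemma Delta_idem e1 e2 : idem e1 -> idem e2 -> e1 * e2 = e2 * e1 ->
  in_Delta (e1 - e2) -> e1 = e2.
Proof.
move=> h1 h2 hc hd.
set d := e1 - e2.
set c := e1 * e2.
have c1 : e1 * c = c by rewrite /c mulrA h1.
have c2 : e2 * c = c by rewrite /c mulrA -hc -mulrA h2.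
have dd : d * d = e1 + e2 - c - c.
  rewrite /d mulrBl !mulrBr h1 h2 -hc -/c opprB.
  by rewrite addrACA addrA.
have d3 : d * (d * d) = d.
  rewrite dd !mulrBr mulrDr.
  have de1 : d * e1 = e1 - c by rewrite /d mulrBl h1 -hc.
  have de2 : d * e2 = c - e2 by rewrite /d mulrBl h2.
  have dc : d * c = 0 by rewrite /d mulrBl c1 c2 subrr.
  rewrite de1 de2 dc !subr0 addrA subrK //.
have ddi : idem (d * d) by rewrite /idem -mulrA d3.
have pp := idemC ddi.
have dp : d * (1 - d * d) = 0 by rewrite mulrBr mulr1 d3 subrr.
have pd : (1 - d * d) * d = 0 by rewrite mulrBl mul1r -mulrA d3 subrr.
have hx : d + (1 - d * d) \is a GRing.unit.
  apply: (@unit_of _ (d + (1 - d * d)));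
    by rewrite mulrDl (mulrDr d) (mulrDr (1 - d * d)) dp pd pp addr0 add0r addrC subrK.
have := hd (- (d + (1 - d * d))); rewrite unitrN => /(_ hx).
rewrite opprD addrA subrr add0r unitrN => hp.
have hp1 := idem_unit pp hp.
have d2 : d * d = 0.
  by have := congr1 (fun z => 1 - z) hp1; rewrite /= opprB addrC subrK subrr.
by apply/subr0_eq; rewrite -/d -d3 d2 mulr0.
Qed.

End Aux.

Theorem corollary4p7 (R : unitRingType) :
  uniquely_clean R <-> (DI_ring R /\ idempotents_central R).
Proof.
split.
- move=> uc; split; first last.
    exact: uc_central.
  move=> r; have [[e [u [he [hu hr]]]] _] := uc (r + 1).
  exists e, (u - 1); split => //; split; first exact: uc_delta.
  by rewrite addrA -hr addrK.
- case=> di cen r; split.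
  + have [e [b [he [hb hr]]]] := di (r - 1).
    exists e, (b + 1); split => //; split; first by apply: hb; exact: unitr1.
    by rewrite addrA -hr subrK.
  + move=> e1 u1 e2 u2 h1 hu1 hr1 h2 hu2 hr2.
    have [b1 [hb1 hu1']] := DI_unit di hu1.
    have [b2 [hb2 hu2']] := DI_unit di hu2.
    have he : e1 = e2.
      apply: Delta_idem => //; first exact: cen.
      have -> : e1 - e2 = b2 + - b1.
        have E : e1 + (1 + b1) = e2 + (1 + b2) by rewrite -hu1' -hu2' -hr1 -hr2.
        rewrite (addrCA e1) (addrCA e2) in E; move/addrI in E.
        by apply/eqP; rewrite subr_eq addrAC (addrC b2) -E addrK.
      exact: DeltaD hb2 (DeltaN hb1).
    by split => //; apply: (@addrI _ e1); rewrite -hr1 hr2 he.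
Qed.
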